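(* Let $G$ be a simple graph on $n$ vertices with $cM_2(G)\ge cM_2(H)$ for every simple graph $H$ on $n$ vertices, and let $F$, $X$, $Y$ be as defined in the context. If $u\in X$, $v\in Y$ and $uv\in E(G)$, then $\overrightarrow{uv}$ is an arc of $F$ (in particular $d_G(u)>d_G(v)$).
   Context: All graphs are finite and simple; $d_G(u)$ is the degree of $u$ and $cM_2(G)=\sum_{uv\in E(G)}|d_G(u)^2-d_G(v)^2|$. The canonical mixed graph $F$ of $G$ has vertex set $V(G)$; for each edge $uv\in E(G)$: if $d_G(u)>d_G(v)$ then $F$ contains the arc $\overrightarrow{uv}$, and if $d_G(u)=d_G(v)$ then $F$ contains the undirected edge $uv$. $d^+_F(u)$ (resp. $d^-_F(u)$) is the number of arcs of $F$ with tail (resp. head) $u$. $X=\{u\in V(G): d^+_F(u)\ge d^-_F(u)\}$ and $Y=\{u\in V(G): d^+_F(u)< d^-_F(u)\}$. *)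

(* Defs.v *)
From mathcomp Require Import all_boot.
Set Implicit Arguments. Unset Strict Implicit. Unset Printing Implicit Defensive.

Definition simple_graph (n : nat) (g : rel 'I_n) : Prop :=
  (forall x y, g x y = g y x) /\ (forall x, g x x = false).

Definition deg (n : nat) (g : rel 'I_n) (u : 'I_n) : nat := #|[set w | g u w]|.

Definition absdiff (a b : nat) : nat := (a - b) + (b - a).

Definition cM2 (n : nat) (g : rel 'I_n) : nat :=
  \sum_(u : 'I_n) \sum_(v : 'I_n | (u < v) && g u v)
     absdiff (deg g u ^ 2) (deg g v ^ 2).

Definition arcF (n : nat) (g : rel 'I_n) (u v : 'I_n) : bool :=
  g u v && (deg g v < deg g u).

Definition outdegF (n : nat) (g : rel 'I_n) (u : 'I_n) : nat :=
  #|[set w | arcF g u w]|.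
Definition indegF (n : nat) (g : rel 'I_n) (u : 'I_n) : nat :=
  #|[set w | arcF g w u]|.

Definition inX (n : nat) (g : rel 'I_n) (u : 'I_n) : bool :=
  indegF g u <= outdegF g u.
Definition inY (n : nat) (g : rel 'I_n) (u : 'I_n) : bool :=
  outdegF g u < indegF g u.

(* Main.v *)
Require Import Defs.
From mathcomp Require Import all_boot all_order all_algebra.
From mathcomp Require Import zify.
Import Order.TTheory GRing.Theory Num.Theory.
Set Implicit Arguments. Unset Strict Implicit. Unset Printing Implicit Defensive.

Definition hmove n (g : rel 'I_n) (u v w : 'I_n) : rel 'I_n := fun x y =>
  if ((x == u) && (y == w)) || ((x == w) && (y == u)) then true
  else if ((x == v) && (y == w)) || ((x == w) && (y == v)) then false
  else g x y.


Lemma hm_simple n (g : rel 'I_n) u v w : simple_graph g -> w != u -> w != v ->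
  simple_graph (hmove g u v w).
Proof.
move=> [gs gi] wu wv; split.
  move=> x y; rewrite /hmove (gs x y).
  by case: (x == u); case: (y == w); case: (x == w); case: (y == u); case: (x == v); case: (y == v).
move=> x; rewrite /hmove.
have e1 : (x == u) && (x == w) = false.
  by apply/negP => /andP [/eqP -> /eqP e]; rewrite e eqxx in wu.
have e2 : (x == w) && (x == u) = false by rewrite andbC.
have e3 : (x == v) && (x == w) = false.
  by apply/negP => /andP [/eqP -> /eqP e]; rewrite e eqxx in wv.
have e4 : (x == w) && (x == v) = false by rewrite andbC.
by rewrite e1 e2 e3 e4 gi.
Qed.

Lemma hm_u n (g : rel 'I_n) u v w : u != v -> w != u -> forall y,
  hmove g u v w u y = (y == w) || g u y.
Proof.
move=> uv wu y; rewrite /hmove eqxx /= (negbTE uv) (eq_sym u w) (negbTE wu) /=.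
by case: (y == w).
Qed.

Lemma hm_v n (g : rel 'I_n) u v w : u != v -> w != v -> forall y,
  hmove g u v w v y = (y != w) && g v y.
Proof.
move=> uv wv y; rewrite /hmove eqxx /= (eq_sym v u) (negbTE uv) (eq_sym v w) (negbTE wv) /=.
by case: (y == w).
Qed.

Lemma hm_w n (g : rel 'I_n) u v w : u != v -> w != u -> w != v -> forall y,
  hmove g u v w w y = (y == u) || ((y != v) && g w y).
Proof.
move=> uv wu wv y; rewrite /hmove eqxx /= (negbTE wu) (negbTE wv) /=.
by case: (y == u); case: (y == v).
Qed.

Lemma hm_x n (g : rel 'I_n) u v w x : x != u -> x != v -> x != w -> forall y,
  hmove g u v w x y = g x y.
Proof.
by move=> xu xv xw y; rewrite /hmove (negbTE xu) (negbTE xv) (negbTE xw).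
Qed.

Lemma hm_xy n (g : rel 'I_n) u v w x y : x != u -> x != v -> y != u -> y != v ->
  hmove g u v w x y = g x y.
Proof.
move=> xu xv yu yv; rewrite /hmove (negbTE xu) (negbTE xv) (negbTE yu) (negbTE yv).
by rewrite !andbF.
Qed.

Lemma deg_hu n (g : rel 'I_n) u v w : simple_graph g -> g u v -> ~~ g u w -> w != u ->
  deg (hmove g u v w) u = (deg g u).+1.
Proof.
move=> [gs gi] guv nguw wu.
have uv : u != v by apply/eqP => e; rewrite e gi in guv.
rewrite /deg.
have -> : [set y | hmove g u v w u y] = w |: [set y | g u y].
  by apply/setP => y; rewrite !inE hm_u.
by rewrite cardsU1 inE nguw.
Qed.

Lemma deg_hv n (g : rel 'I_n) u v w : simple_graph g -> g u v -> g v w ->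
  (deg g v) = (deg (hmove g u v w) v).+1.
Proof.
move=> [gs gi] guv gvw.
have uv : u != v by apply/eqP => e; rewrite e gi in guv.
have wv : w != v by apply/eqP => e; rewrite e gi in gvw.
rewrite /deg.
have -> : [set y | hmove g u v w v y] = [set y | g v y] :\ w.
  by apply/setP => y; rewrite !inE hm_v.
by rewrite (cardsD1 w [set y | g v y]) inE gvw.
Qed.

Lemma deg_hw n (g : rel 'I_n) u v w : simple_graph g -> g u v -> g v w -> ~~ g u w -> w != u ->
  deg (hmove g u v w) w = deg g w.
Proof.
move=> [gs gi] guv gvw nguw wu.
have uv : u != v by apply/eqP => e; rewrite e gi in guv.
have wv : w != v by apply/eqP => e; rewrite e gi in gvw.
rewrite /deg.
have -> : [set y | hmove g u v w w y] = u |: ([set y | g w y] :\ v).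
  by apply/setP => y; rewrite !inE hm_w // andbC.
rewrite cardsU1 !inE (negbTE uv) (gs w u) (negbTE nguw) andbF /=.
by rewrite [in RHS](cardsD1 v [set y | g w y]) inE gs gvw.
Qed.

Lemma deg_hx n (g : rel 'I_n) u v w x : simple_graph g -> g u v -> g v w -> ~~ g u w -> w != u ->
  x != u -> x != v -> deg (hmove g u v w) x = deg g x.
Proof.
move=> sg guv gvw nguw wu xu xv.
case: (eqVneq x w) => [->|xw]; first exact: deg_hw.
rewrite /deg; apply: eq_card => y; rewrite !inE hm_x //.
Qed.
Definition phi n (g : rel 'I_n) x y : nat :=
  if g x y then absdiff (deg g x ^ 2) (deg g y ^ 2) else 0.

Lemma phi_sym n (g : rel 'I_n) : simple_graph g -> forall x y, phi g x y = phi g y x.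
Proof. move=> [gs _] x y; rewrite /phi gs; case: (g y x) => //; rewrite /absdiff addnC //. Qed.

Lemma cM2_sym n (g : rel 'I_n) : simple_graph g ->
  2 * cM2 g = \sum_(x : 'I_n) \sum_(y : 'I_n) phi g x y.
Proof.
move=> sg; have [gs gi] := sg.
have e1 : cM2 g = \sum_(x : 'I_n) \sum_(y : 'I_n) (if x < y then phi g x y else 0).
  apply: eq_bigr => x _; rewrite big_mkcond; apply: eq_bigr => y _.
  by rewrite /phi; case: (x < y); case: (g x y).
have e2 : \sum_(x : 'I_n) \sum_(y : 'I_n) phi g x y =
   \sum_(x : 'I_n) \sum_(y : 'I_n) (if x < y then phi g x y else 0) +
   \sum_(x : 'I_n) \sum_(y : 'I_n) (if y < x then phi g x y else 0).
  rewrite -big_split; apply: eq_bigr => x _; rewrite -big_split; apply: eq_bigr => y _ /=.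
  case: (ltngtP x y) => h //=; first by rewrite addn0.
  have -> : x = y by apply: val_inj.
  by rewrite /phi gi.
have e3 : \sum_(x : 'I_n) \sum_(y : 'I_n) (if y < x then phi g x y else 0) =
          \sum_(x : 'I_n) \sum_(y : 'I_n) (if x < y then phi g x y else 0).
  rewrite exchange_big; apply: eq_bigr => x _; apply: eq_bigr => y _.
  by rewrite phi_sym.
by rewrite e2 e3 e1 mul2n addnn.
Qed.
Lemma exists_w n (g : rel 'I_n) u v :
  simple_graph g -> inX g u -> inY g v -> g u v -> deg g u <= deg g v ->
  exists w, [&& g v w, ~~ g u w, w != u & deg g v <= deg g w].
Proof.
move=> [gs gi] hX hY guv hab.
case: (boolP [exists w, [&& g v w, ~~ g u w, w != u & deg g v <= deg g w]]).
  by move/existsP.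
rewrite negb_exists => /forallP hT; exfalso.
move: hX hY; rewrite /inX /inY /indegF /outdegF.
set Ou := [set w | arcF g u w]; set Iu := [set w | arcF g w u].
set Ov := [set w | arcF g v w]; set Iv := [set w | arcF g w v].
set Nu := [set w | g u w]; set Nv := [set w | g v w].
move=> hX hY.
have s1 : Iv \subset Iu.
  apply/subsetP => y; rewrite !inE /arcF => /andP [gyv lt].
  have hy := hT y.
  case guy: (g y u) => /=; last first.
    have yu : y != u by apply/eqP => e; subst y; move: lt; rewrite ltnNge hab.
    have gvy : g v y by rewrite gs.
    have guy' : g u y = false by rewrite gs.
    by move: hy; rewrite gvy guy' yu /= (ltnW lt).
  exact: leq_ltn_trans hab lt.
have c1 := subset_leq_card s1.
have e2 : #|Ou| = #|Ou :&: Nv| + #|Ou :\: Nv| by rewrite cardsID.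
have s3 : Ou :&: Nv \subset Ov :&: Nu.
  apply/subsetP => y; rewrite !inE /arcF => /andP [/andP [guy lt] gvy].
  by rewrite gvy guy (leq_trans lt hab).
have s4 : Ou :\: Nv \subset (Nu :\: Nv) :\ v.
  apply/subsetP => y; rewrite !inE /arcF => /andP [gvy /andP [guy lt]].
  rewrite gvy guy !andbT; apply/eqP => e; subst y; move: lt; rewrite ltnNge hab //.
have e5a : #|Nu| = #|Nu :&: Nv| + #|Nu :\: Nv| by rewrite cardsID.
have e5b : #|Nv| = #|Nv :&: Nu| + #|Nv :\: Nu| by rewrite cardsID.
have s6 : (Nv :\: Nu) :\ u \subset Ov :\: Nu.
  apply/subsetP => y; rewrite !inE /arcF => /andP [yu /andP [guy gvy]].
  have hy := hT y.
  move: hy; rewrite gvy guy yu /= -ltnNge => ->.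
  by [].
have e7 : #|Ov| = #|Ov :&: Nu| + #|Ov :\: Nu| by rewrite cardsID.
have vS : v \in Nu :\: Nv by rewrite !inE gi guv.
have uT : u \in Nv :\: Nu by rewrite !inE gi gs guv.
have e8 := cardsD1 v (Nu :\: Nv).
have e9 := cardsD1 u (Nv :\: Nu).
rewrite vS in e8; rewrite uT in e9.
have c3 := subset_leq_card s3.
have c4 := subset_leq_card s4.
have c6 := subset_leq_card s6.
have hNu : #|Nu| = deg g u by [].
have hNv : #|Nv| = deg g v by [].
rewrite setIC in e5b.
lia.
Qed.
Lemma num_main a b c : 1 <= a -> a <= b -> b <= c ->
  absdiff (b ^ 2) (c ^ 2) + absdiff (a ^ 2) (b ^ 2) <
  absdiff ((a.+1) ^ 2) (c ^ 2) + absdiff ((a.+1) ^ 2) (b.-1 ^ 2) + (2*a + 2*b) * (a < b).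
Proof.
move=> h1 h2 h3; rewrite /absdiff.
case: (ltngtP a b) => hab; last first.
- subst b. nia.
- lia.
- case: (leqP c a.+1) => hc.
  + have -> : b = a.+1 by lia.
    have -> : c = a.+1 by lia.
    nia.
  + nia.
Qed.

Local Open Scope ring_scope.
Lemma num_u (a e : nat) :
  ((absdiff ((a.+1) ^ 2) (e ^ 2))%:R - (absdiff (a ^ 2) (e ^ 2))%:R : int) =
  if (e <= a)%N then (2 * a + 1)%N%:R else - (2 * a + 1)%N%:R.
Proof.
rewrite /absdiff; case: leqP => h; nia.
Qed.

Lemma num_v (b e : nat) : (1 <= b)%N ->
  ((absdiff ((b.-1) ^ 2) (e ^ 2))%:R - (absdiff (b ^ 2) (e ^ 2))%:R : int) =
  if (e < b)%N then - (2 * b - 1)%N%:R else (2 * b - 1)%N%:R.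
Proof.
move=> hb; rewrite /absdiff; case: ltnP => h; nia.
Qed.

Lemma pt_lemma (a b e : nat) (gu gv : bool) : (1 <= b)%N -> (a <= b)%N ->
  (2*a+1)%N%:R * ((gu && (e < a)%N) : nat)%:R - (2*a+1)%N%:R * ((gu && (a < e)%N):nat)%:R +
  ((2*b-1)%N%:R * ((gv && (b < e)%N):nat)%:R - (2*b-1)%N%:R * ((gv && (e < b)%N):nat)%:R) <=
  (if gu then absdiff (a.+1 ^ 2) (e ^ 2) else 0%N)%:R - (if gu then absdiff (a ^ 2) (e ^ 2) else 0%N)%:R +
  ((if gv then absdiff (b.-1 ^ 2) (e ^ 2) else 0%N)%:R - (if gv then absdiff (b ^ 2) (e ^ 2) else 0%N)%:R) :> int.
Proof.
move=> hb1 hab.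
have nu := num_u a e; have nv := num_v e hb1.
set K := (2 * a + 1)%N%:R : int; set K' := (2 * b - 1)%N%:R : int.
have K0 : 0 <= K by rewrite /K ler0n.
have K'0 : 0 <= K' by rewrite /K' ler0n.
case: gu; case: gv; rewrite /= ?nu ?nv;
case: (ltngtP e a) => h1; case: (ltngtP e b) => h2;
rewrite /= ?mulr1n ?mulr0n ?mulr1 ?mulr0 ?subr0 ?sub0r ?add0r ?addr0 ?lexx //; lia.
Qed.

Lemma sum_decomp n (D : 'I_n -> 'I_n -> int) (u v : 'I_n) : u != v ->
  (forall x y, D x y = D y x) ->
  (forall x y, x != u -> x != v -> y != u -> y != v -> D x y = 0) ->
  \sum_(x : 'I_n) \sum_(y : 'I_n) D x y =
  (\sum_(y | (y != u) && (y != v)) (D u y + D v y)) *+ 2 + (D u v) *+ 2 + D u u + D v v.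
Proof.
move=> uv Ds D0.
have vu : v != u by rewrite eq_sym.
have row : forall x, \sum_(y : 'I_n) D x y = D x u + D x v + \sum_(y | (y != u) && (y != v)) D x y.
  move=> x; rewrite (bigD1 u) //= (bigD1 v) //= addrA //.
rewrite [LHS](bigD1 u) //= [\sum_(i | i != u) _](bigD1 v) //=.
have rest : \sum_(x | (x != u) && (x != v)) \sum_(y : 'I_n) D x y =
            \sum_(y | (y != u) && (y != v)) (D u y + D v y).
  rewrite [in RHS](eq_bigl (fun x => (x != u) && (x != v))) //.
  apply: eq_bigr => x /andP [xu xv]; rewrite row.
  rewrite big1 ?addr0; last by move=> y /andP [yu yv]; apply: D0.
  by rewrite (Ds x u) (Ds x v).
have -> : \sum_(i | (i != u) && (i != v)) \sum_(y : 'I_n) D i y =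
          \sum_(x | (x != u) && (x != v)) \sum_(y : 'I_n) D x y.
  by apply: eq_bigl => x; rewrite andbC.
rewrite rest !row (Ds v u) big_split /=.
set A := \sum_(i < n | (i != u) && (i != v)) D u i. set B := \sum_(i < n | (i != u) && (i != v)) D v i. rewrite !mulr2n. lia.
Qed.

Lemma fin_arith (a b po pi piv pov ou iu ov iv F1 F2 F3 F4 : nat) (beta : bool) (S : int) :
  (1 <= b)%N -> (ou <= po)%N -> (pi + beta <= iu)%N -> (iv <= piv + 1)%N ->
  (pov + beta <= ov)%N -> (iu <= ou)%N -> (ov < iv)%N ->
  (2*a+1)%N%:R * po%:R - (2*a+1)%N%:R * pi%:R +
    ((2*b-1)%N%:R * piv%:R - (2*b-1)%N%:R * pov%:R) <= S ->
  (F2 + F4 < F1 + F3 + (2*a+2*b)*beta)%N ->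
  0 < (F1%:R - F2%:R + S) *+ 2 + (F3%:R - F4%:R) *+ 2.
Proof.
move=> hb c1 c2 c3 c4 hX hY L N.
have q1 : (beta : nat)%:R <= po%:R - pi%:R :> int by lia.
have q2 : (beta : nat)%:R <= piv%:R - pov%:R :> int by lia.
have K0 : 0 <= (2*a+1)%N%:R :> int by rewrite ler0n.
have K'0 : 0 <= (2*b-1)%N%:R :> int by rewrite ler0n.
have r1 := ler_wpM2l K0 q1.
have r2 := ler_wpM2l K'0 q2.
rewrite !mulrBr in r1 r2.
move: r1 r2 L N; set x1 := _ * po%:R; set x2 := _ * pi%:R; set x3 := _ * piv%:R; set x4 := _ * pov%:R.
move=> r1 r2 L N.
have e : ((2*a+1)%N%:R * (beta : nat)%:R + (2*b-1)%N%:R * (beta : nat)%:R : int) = ((2*a+2*b)*beta)%N%:R.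
  case: beta {q1 q2 r1 r2 L N c2 c4} => /=; rewrite ?mulr1 ?mulr0 ?muln1 ?muln0 -?natrD; lia.
move: e r1 r2; set y1 := _ * (beta : nat)%:R; set y2 := _ * (beta : nat)%:R => e r1 r2.
rewrite !mulr2n; lia.
Qed.

Lemma sum_ind n (P : pred 'I_n) (S : {set 'I_n}) :
  \sum_(y | P y) (((y \in S) : nat)%:R : int) = (#|[set y in S | P y]|)%:R.
Proof.
rewrite -natr_sum; congr (_%:R).
have -> : (\sum_(y | P y) ((y \in S) : nat) = \sum_(y | P y && (y \in S)) 1)%N.
  by rewrite big_mkcondr; apply: eq_bigr => y _; case: (y \in S).
rewrite sum1_card; apply: eq_card => y; rewrite !inE andbC //.
Qed.

Lemma phi_irr n (g : rel 'I_n) x : simple_graph g -> phi g x x = 0%N.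
Proof. by move=> [_ gi]; rewrite /phi gi. Qed.

Lemma improve n (g : rel 'I_n) u v w : simple_graph g -> inX g u -> inY g v -> g u v ->
  (deg g u <= deg g v)%N -> g v w -> ~~ g u w -> w != u -> (deg g v <= deg g w)%N ->
  (cM2 g < cM2 (hmove g u v w))%N.
Proof.
move=> sg hX hY guv hab gvw nguw wu hbc.
have [gs gi] := sg.
have uv : u != v by apply/eqP => e; rewrite e gi in guv.
have wv : w != v by apply/eqP => e; rewrite e gi in gvw.
set h := hmove g u v w.
have sh : simple_graph h by apply: hm_simple.
have hu : deg h u = (deg g u).+1 by apply: deg_hu.
have hv : deg g v = (deg h v).+1 by apply: deg_hv.
have hx : forall x, x != u -> x != v -> deg h x = deg g x.
  by move=> x xu xv; apply: deg_hx.
have ha1 : (0 < deg g u)%N by apply/card_gt0P; exists v; rewrite inE.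
set a := deg g u in hab hu ha1; set b := deg g v in hab hv hbc; set c := deg g w in hbc.
have hb1 : (1 <= b)%N by apply: leq_trans hab.
have hv' : deg h v = b.-1 by rewrite hv.
pose D x y : int := (phi h x y)%:R - (phi g x y)%:R.
suff : 0 < \sum_(x : 'I_n) \sum_(y : 'I_n) D x y.
  have e1 : \sum_(x : 'I_n) \sum_(y : 'I_n) D x y =
      (\sum_(x : 'I_n) \sum_(y : 'I_n) phi h x y)%N%:R - (\sum_(x : 'I_n) \sum_(y : 'I_n) phi g x y)%N%:R.
    rewrite !natr_sum -sumrB; apply: eq_bigr => x _; rewrite !natr_sum -sumrB //.
  rewrite e1 -(cM2_sym sh) -(cM2_sym sg) => H.
  lia.
have Ds : forall x y, D x y = D y x.
  by move=> x y; rewrite /D (phi_sym sh x y) (phi_sym sg x y).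
have D0 : forall x y, x != u -> x != v -> y != u -> y != v -> D x y = 0.
  move=> x y xu xv yu yv; rewrite /D /phi /h hm_xy // hx // hx // subrr //.
rewrite (sum_decomp uv Ds D0).
have -> : D u u = 0 by rewrite /D !phi_irr // subrr.
have -> : D v v = 0 by rewrite /D !phi_irr // subrr.
rewrite !addr0.
have wR : (w != u) && (w != v) by rewrite wu wv.
rewrite (bigD1 w) //=.
have Duw : D u w = (absdiff ((a.+1) ^ 2) (c ^ 2))%:R.
  rewrite /D /phi /h hm_u // eqxx /= (negbTE nguw) hu hx // subr0 //.
have Dvw : D v w = - (absdiff (b ^ 2) (c ^ 2))%:R.
  rewrite /D /phi /h hm_v // eqxx /= gvw sub0r //.
have Duv : D u v = (absdiff ((a.+1) ^ 2) ((b.-1) ^ 2))%:R - (absdiff (a ^ 2) (b ^ 2))%:R.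
  rewrite /D /phi /h hm_u // eq_sym (negbTE wv) /= guv -/h hu hv' //.
rewrite Duw Dvw Duv.
set R := fun y : 'I_n => ((y != u) && (y != v)) && (y != w).
set Ou := [set y | arcF g u y]; set Iu := [set y | arcF g y u].
set Ov := [set y | arcF g v y]; set Iv := [set y | arcF g y v].
pose K : int := (2 * a + 1)%N%:R.
pose K' : int := (2 * b - 1)%N%:R.
have pt : forall y, R y -> K * ((y \in Ou) : nat)%:R - K * ((y \in Iu) : nat)%:R +
     (K' * ((y \in Iv) : nat)%:R - K' * ((y \in Ov) : nat)%:R) <= D u y + D v y.
  move=> y /andP [/andP [yu yv] yw].
  rewrite /D /phi /h hm_u // hm_v // yw (negbTE yw) /= -/h hu hv' hx //.
  rewrite !inE /arcF (gs y u) (gs y v) -/a -/b.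
  exact: pt_lemma.
have L : \sum_(i | R i) (K * ((i \in Ou) : nat)%:R - K * ((i \in Iu) : nat)%:R +
     (K' * ((i \in Iv) : nat)%:R - K' * ((i \in Ov) : nat)%:R)) <=
     \sum_(i | R i) (D u i + D v i).
  by apply: ler_sum => i Ri; apply: pt.
rewrite big_split /= !sumrB -!mulr_sumr !sum_ind in L.
have -> : \sum_(i < n | (i != u) && (i != v) && (i != w)) (D u i + D v i) =
          \sum_(i | R i) (D u i + D v i) by [].
move: L; set S := \sum_(i | R i) _ => L.
have bt : arcF g v u = (a < b)%N by rewrite /arcF (gs v u) guv.
have c1 : (#|Ou| <= #|[set y in Ou | R y]|)%N.
  apply: subset_leq_card; apply/subsetP => y Hy.
  rewrite inE Hy /=; move: Hy; rewrite inE /arcF => /andP [guy lt].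
  rewrite /R -andbA; apply/and3P; split.
  - by apply/eqP => e; rewrite e gi in guy.
  - by apply/eqP => e; rewrite e in lt; move: lt; rewrite ltnNge hab.
  - by apply/eqP => e; rewrite -e guy in nguw.
have c2 : (#|[set y in Iu | R y]| + arcF g v u <= #|Iu|)%N.
  have sub : [set y in Iu | R y] \subset Iu :\ v.
    apply/subsetP => y; rewrite !inE => /andP [Hy Ry]; rewrite Hy andbT.
    by move: Ry; rewrite /R => /andP [/andP [_ ->] _].
  have e := cardsD1 v Iu.
  have ev : (v \in Iu) = arcF g v u by rewrite inE.
  by rewrite e ev addnC leq_add2l; apply: subset_leq_card.
have c3 : (#|Iv| <= #|[set y in Iv | R y]| + 1)%N.
  have sub : Iv :\ w \subset [set y in Iv | R y].
    apply/subsetP => y; rewrite !inE => /andP [yw Hy]; rewrite Hy /= /R yw andbT.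
    move: Hy; rewrite /arcF => /andP [gyv lt]; apply/andP; split.
    - by apply/eqP => e; rewrite e in lt; move: lt; rewrite ltnNge hab.
    - by apply/eqP => e; rewrite e gi in gyv.
  have e := cardsD1 w Iv.
  by rewrite e addnC; apply: leq_add; [apply: subset_leq_card | apply: leq_b1].
have c4 : (#|[set y in Ov | R y]| + arcF g v u <= #|Ov|)%N.
  have sub : [set y in Ov | R y] \subset Ov :\ u.
    apply/subsetP => y; rewrite !inE => /andP [Hy Ry]; rewrite Hy andbT.
    by move: Ry; rewrite /R => /andP [/andP [-> _] _].
  have e := cardsD1 u Ov.
  have ev : (u \in Ov) = arcF g v u by rewrite inE.
  by rewrite e ev addnC leq_add2l; apply: subset_leq_card.
move: hX hY; rewrite /inX /inY /indegF /outdegF -/Ou -/Iu -/Ov -/Iv => hX hY.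
rewrite bt in c2 c4.
exact: (fin_arith hb1 c1 c2 c3 c4 hX hY L (num_main ha1 hab hbc)).
Qed.

Close Scope ring_scope.

Theorem corollary2 (n : nat) (g : rel 'I_n) :
  simple_graph g ->
  (forall h : rel 'I_n, simple_graph h -> cM2 h <= cM2 g) ->
  forall u v : 'I_n, inX g u -> inY g v -> g u v -> arcF g u v.
Proof.
move=> sg hmax u v hX hY guv.
rewrite /arcF guv /= ltnNge; apply/negP => hab.
have [w /and4P [gvw nguw wu hbc]] := exists_w sg hX hY guv hab.
have [gs gi] := sg.
have wv : w != v by apply/eqP => e; rewrite e gi in gvw.
have sh := hm_simple sg wu wv.
have le := hmax _ sh.
have lt := improve sg hX hY guv hab gvw nguw wu hbc.
by rewrite leqNgt lt in le.
Qed.
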